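(* Let $n$ be even and $F\colon\mathbb F_2^n\to\mathbb F_2^n$ a quadratic APN function with associated $\mathcal V_F=\{V_b\colon b\in\mathbb F_2^n\setminus\{0\},\ \dim(V_b)\ge1\}$. Then $\dim(V_b)$ is even for every $V_b\in\mathcal V_F$.
   Context: $\langle\cdot,\cdot\rangle$ is the standard dot product. $F$ is APN if for every $a\ne0$ and $c$, $F(x)+F(x+a)=c$ has at most 2 solutions; quadratic if each component $x\mapsto\langle b,F(x)\rangle$ is a quadratic form plus an affine function. With $D_{F,a}(x)=F(x)+F(x+a)$, $H_b=\{x:\langle b,x\rangle=0\}$, $\overline{H_b}=\{x:\langle b,x\rangle=1\}$: $T_b=\{a:\mathrm{Im}(D_{F,a})=H_b\}\cup\{0\}$, $\overline{T_b}=\{a:\mathrm{Im}(D_{F,a})=\overline{H_b}\}$, $V_b=T_b\cup\overline{T_b}$ (a linear subspace). *)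

(* Defs.v *)
From HB Require Import structures.
From mathcomp Require Import all_boot all_order all_algebra.
Set Implicit Arguments. Unset Strict Implicit. Unset Printing Implicit Defensive.
Import GRing.Theory.
Local Open Scope ring_scope.

Notation vecF2 n := 'rV['F_2]_n.

Definition dot n (b x : vecF2 n) : 'F_2 := \sum_(i < n) b 0 i * x 0 i.

Definition qform n (Q : 'M['F_2]_n) (x : vecF2 n) : 'F_2 :=
  \sum_(i < n) \sum_(j < n) Q i j * x 0 i * x 0 j.

Definition quadratic n (F : vecF2 n -> vecF2 n) : Prop :=
  forall b : vecF2 n, exists (Q : 'M['F_2]_n) (c : vecF2 n) (d : 'F_2),
    forall x, dot b (F x) = qform Q x + dot c x + d.

Definition Der n (F : vecF2 n -> vecF2 n) (a x : vecF2 n) : vecF2 n := F x + F (x + a).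

Definition APN n (F : vecF2 n -> vecF2 n) : Prop :=
  forall a c : vecF2 n, a != 0 -> (#|[set x | Der F a x == c]| <= 2)%N.

Definition ImD n (F : vecF2 n -> vecF2 n) (a : vecF2 n) : {set vecF2 n} :=
  [set Der F a x | x in [set: vecF2 n]].

Definition Hb n (b : vecF2 n) : {set vecF2 n} := [set x | dot b x == 0].
Definition Hbbar n (b : vecF2 n) : {set vecF2 n} := [set x | dot b x == 1].

Definition Tb n (F : vecF2 n -> vecF2 n) (b : vecF2 n) : {set vecF2 n} :=
  [set a | ImD F a == Hb b] :|: [set 0].
Definition Tbbar n (F : vecF2 n -> vecF2 n) (b : vecF2 n) : {set vecF2 n} :=
  [set a | ImD F a == Hbbar b].
Definition Vb n (F : vecF2 n -> vecF2 n) (b : vecF2 n) : {set vecF2 n} :=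
  Tb F b :|: Tbbar F b.

(* dimension of V_b (a linear subspace): dimension of its span *)
Definition dimVb n (F : vecF2 n -> vecF2 n) (b : vecF2 n) : nat :=
  \dim <<enum (Vb F b)>>%VS.

(* Main.v *)
Require Import Defs.
From HB Require Import structures.
From mathcomp Require Import all_boot all_order all_algebra all_field.
From mathcomp Require Import ring zify.
Import GRing.Theory Num.Theory.
Local Open Scope ring_scope.
Set Implicit Arguments. Unset Strict Implicit.


Lemma F2_cases (z : 'F_2) : z = 0 \/ z = 1.
Proof. case: z => [[|[|k]]] // Hk; [left|right]; exact: val_inj. Qed.

Lemma F2_addK (z w : 'F_2) : z + w + w = z.
Proof. by case: (F2_cases z) => ->; case: (F2_cases w) => ->; apply/eqP. Qed.

Lemma F2_2 (z : 'F_2) : z *+ 2 = 0.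
Proof. by case: (F2_cases z) => ->; apply/eqP. Qed.

Lemma F2_neq0 (z : 'F_2) : z != 0 -> z = 1.
Proof. by case: (F2_cases z) => ->. Qed.

Lemma vaddK n (x y : vecF2 n) : x + y + y = x.
Proof. by apply/rowP => i; rewrite !mxE F2_addK. Qed.

Definition chi (z : 'F_2) : int := if z == 0 then 1 else -1.

Lemma chi0 : chi 0 = 1. Proof. by []. Qed.
Lemma chi1 : chi 1 = -1. Proof. by []. Qed.

Lemma chiD z w : chi (z + w) = chi z * chi w.
Proof. by case: (F2_cases z) => ->; case: (F2_cases w) => ->. Qed.

Section Lin.
Variable n : nat.
Implicit Types (b x y : vecF2 n) (Q : 'M['F_2]_n).

Lemma dotDr b x y : dot b (x + y) = dot b x + dot b y.
Proof. rewrite /dot -big_split; apply: eq_bigr => i _; rewrite mxE /=; ring. Qed.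

Lemma dotDl b b' x : dot (b + b') x = dot b x + dot b' x.
Proof. rewrite /dot -big_split; apply: eq_bigr => i _; rewrite mxE /=; ring. Qed.

Lemma dotC b x : dot b x = dot x b.
Proof. by apply: eq_bigr => i _; rewrite mulrC. Qed.

Lemma dot0r b : dot b 0 = 0.
Proof. by apply: big1 => i _; rewrite mxE mulr0. Qed.

Definition bil Q x y := \sum_(i < n) \sum_(j < n) Q i j * (x 0 i * y 0 j + y 0 i * x 0 j).

Lemma qformD Q x y : qform Q (x + y) = qform Q x + qform Q y + bil Q x y.
Proof.
rewrite /qform /bil -!big_split; apply: eq_bigr => i _.
rewrite -!big_split; apply: eq_bigr => j _; rewrite !mxE /=; ring.
Qed.

Lemma bilDl Q x x' y : bil Q (x + x') y = bil Q x y + bil Q x' y.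
Proof.
rewrite /bil -!big_split; apply: eq_bigr => i _.
rewrite -!big_split; apply: eq_bigr => j _; rewrite !mxE /=; ring.
Qed.

Lemma bilC Q x y : bil Q x y = bil Q y x.
Proof. by apply: eq_bigr => i _; apply: eq_bigr => j _; rewrite addrC. Qed.

Lemma bilDr Q x y y' : bil Q x (y + y') = bil Q x y + bil Q x y'.
Proof. by rewrite bilC bilDl !(bilC Q x). Qed.

Lemma bil0r Q x : bil Q x 0 = 0.
Proof. by apply: big1 => i _; apply: big1 => j _; rewrite !mxE !(mulr0,mul0r) addr0 mulr0. Qed.

Lemma qform0 Q : qform Q 0 = 0.
Proof. by apply: big1 => i _; apply: big1 => j _; rewrite !mxE !mulr0. Qed.

Lemma dot_delta b i : dot b (delta_mx 0 i) = b 0 i.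
Proof.
rewrite /dot (bigD1 i) //= big1 ?addr0.
  by rewrite mxE !eqxx mulr1.
by move=> j /negbTE ji; rewrite mxE ji andbF mulr0.
Qed.

Lemma exists_coord b : b != 0 -> exists i, b 0 i = 1.
Proof.
move=> bnz; case: (boolP [exists i, b 0 i != 0]) => [/existsP [i /F2_neq0 H1]|H].
  by exists i.
case/eqP: bnz; apply/rowP => j; rewrite mxE.
by move: H; rewrite negb_exists => /forallP /(_ j); rewrite negbK => /eqP.
Qed.

End Lin.


Lemma int_eqN0 (s : int) : s = - s -> s = 0.
Proof. move=> h; lia. Qed.

Lemma sum_chi_bal n (S : {set vecF2 n}) (g : vecF2 n -> 'F_2) s0 :
  (forall x y, x \in S -> y \in S -> x + y \in S) -> s0 \in S -> g s0 = 1 ->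
  (forall x, x \in S -> g (x + s0) = g x + g s0) ->
  \sum_(x in S) chi (g x) = 0.
Proof.
move=> clS s0S gs0 gadd; apply: int_eqN0.
rewrite {1}(reindex_inj (addIr s0)) /=.
rewrite (eq_bigl (fun x => x \in S)) => [|x].
  rewrite -sumrN; apply: eq_bigr => x xS.
  by rewrite gadd // gs0 chiD chi1 mulrN1.
apply/idP/idP => [h|]; last by move=> xS; apply: clS.
by rewrite -(vaddK x s0); apply: clS.
Qed.

Lemma sum_chi_const n (S : {set vecF2 n}) (g : vecF2 n -> 'F_2) :
  (forall x, x \in S -> g x = 0) -> \sum_(x in S) chi (g x) = #|S|%:R.
Proof.
move=> h; rewrite (eq_bigr (fun _ => 1)) => [|x xS]; last by rewrite h.
by rewrite sumr_const.
Qed.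

Lemma card_vec n : #|[set: vecF2 n]| = (2 ^ n)%N.
Proof. by rewrite cardsT card_mx card_Fp // mul1n. Qed.

Lemma card_Hb n (b : vecF2 n) : b != 0 -> (#|Hb b| * 2 = 2 ^ n)%N /\ (#|Hbbar b| * 2 = 2 ^ n)%N.
Proof.
move=> /exists_coord [i bi].
set x0 := delta_mx 0 i : vecF2 n.
have dx0 : dot b x0 = 1 by rewrite dot_delta.
have eC : Hbbar b = ~: Hb b.
  by apply/setP => y; rewrite !inE; case: (F2_cases (dot b y)) => ->.
have eI : Hbbar b = [set y + x0 | y in Hb b].
  apply/setP => y; rewrite inE; apply/idP/imsetP => [/eqP hy|[z]].
    exists (y + x0); last by rewrite vaddK.
    by rewrite inE dotDr hy dx0.
  by rewrite inE => /eqP hz ->; rewrite dotDr hz dx0.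
have e1 : #|Hbbar b| = #|Hb b| by rewrite eI card_imset //; apply: addIr.
have e2 := cardsC (Hb b); rewrite -eC e1 -cardsT card_vec in e2.
by rewrite e1 muln2 -addnn e2.
Qed.

Lemma card_ImD n (F : vecF2 n -> vecF2 n) a : APN F -> a != 0 ->
  (2 ^ n <= #|ImD F a| * 2)%N.
Proof.
move=> hapn anz; rewrite -card_vec -sum1_card.
rewrite (partition_big (Der F a) (mem (ImD F a))) /=; last first.
  by move=> x _; apply: imset_f.
rewrite -sum_nat_const; apply: leq_sum => y _.
rewrite (eq_bigl (fun x => x \in [set x | Der F a x == y])) => [|x]; last by rewrite !inE.
by rewrite sum1_card; apply: hapn.
Qed.


Lemma Vb_rad n (F : vecF2 n -> vecF2 n) b Q c d :
  APN F -> b != 0 ->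
  (forall x, dot b (F x) = qform Q x + dot c x + d) ->
  Vb F b = [set a | [forall x, bil Q x a == 0]].
Proof.
move=> hapn bnz hQ.
have key : forall a x, dot b (Der F a x) = bil Q x a + (qform Q a + dot c a).
  move=> a x; rewrite /Der dotDr !hQ qformD dotDr.
  set u := qform Q x + dot c x + d.
  have -> : u + (qform Q x + qform Q a + bil Q x a + (dot c x + dot c a) + d)
     = bil Q x a + (qform Q a + dot c a) + u *+ 2 by rewrite /u; ring.
  by rewrite F2_2 addr0.
have [cH cHb] := card_Hb bnz.
apply/setP => a; rewrite [in RHS]inE. apply/idP/forallP => [Va x|ra].
  have bil0a : bil Q 0 a = 0 by rewrite bilC bil0r.
  have [->|anz] := eqVneq a 0; first by rewrite bil0r.
  suff : dot b (Der F a x) = dot b (Der F a 0).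
    by rewrite !key bil0a add0r => h; apply/eqP; apply: (addIr (qform Q a + dot c a)); rewrite add0r.
  move: Va; rewrite !inE (negbTE anz) orbF => /orP [] /eqP hI.
    have : Der F a x \in ImD F a by apply: imset_f.
    have : Der F a 0 \in ImD F a by apply: imset_f.
    by rewrite hI !inE => /eqP -> /eqP ->.
  have : Der F a x \in ImD F a by apply: imset_f.
  have : Der F a 0 \in ImD F a by apply: imset_f.
  by rewrite hI !inE => /eqP -> /eqP ->.
have [->|anz] := eqVneq a 0; first by rewrite !inE eqxx orbT.
have hc := card_ImD hapn anz.
have hD : forall x, dot b (Der F a x) = qform Q a + dot c a.
  by move=> x; rewrite key (eqP (ra x)) add0r.
rewrite !inE (negbTE anz) orbF.
case: (F2_cases (qform Q a + dot c a)) => he.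
  apply/orP; left; rewrite eqEcard; apply/andP; split.
    by apply/subsetP => y /imsetP [x _ ->]; rewrite inE hD he.
  by rewrite -(leq_pmul2r (_ : 0 < 2)%N) // cH.
apply/orP; right; rewrite eqEcard; apply/andP; split.
  by apply/subsetP => y /imsetP [x _ ->]; rewrite inE hD he.
by rewrite -(leq_pmul2r (_ : 0 < 2)%N) // cHb.
Qed.


Lemma span_set n (R : {set vecF2 n}) :
  0 \in R -> (forall x y, x \in R -> y \in R -> x + y \in R) ->
  forall x, (x \in <<enum R>>%VS) = (x \in R).
Proof.
move=> R0 RD x; apply/idP/idP => [|xR]; last by apply: memv_span; rewrite mem_enum.
rewrite -{1}[enum R]in_tupleE => /coord_span ->.
apply: (big_ind (fun v => v \in R)) => // i _.
set s := coord _ i x; set v := _`_i.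
have vR : v \in R by rewrite -mem_enum /v mem_nth // -cardE size_tuple.
by case: (F2_cases s) => ->; rewrite ?scale0r ?scale1r.
Qed.

Lemma card_span n (R : {set vecF2 n}) :
  0 \in R -> (forall x y, x \in R -> y \in R -> x + y \in R) ->
  #|R| = (2 ^ \dim <<enum R>>%VS)%N.
Proof.
move=> R0 RD; transitivity #|<<enum R>>%VS|.
  by apply: eq_card => x; rewrite span_set.
by rewrite card_vspace card_Fp.
Qed.


Lemma sum_chi_balT n (g : vecF2 n -> 'F_2) s0 :
  g s0 = 1 -> (forall x, g (x + s0) = g x + g s0) ->
  \sum_x chi (g x) = 0.
Proof.
move=> gs0 gadd.
transitivity (\sum_(x in [set: vecF2 n]) chi (g x)).
  by apply: eq_bigl => x; rewrite in_setT.
by apply: (@sum_chi_bal n [set: vecF2 n] g s0) => // *; rewrite in_setT.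
Qed.

Lemma walsh_sq n (Q : 'M['F_2]_n) (R : {set vecF2 n}) :
  R = [set a | [forall x, bil Q x a == 0]] ->
  exists m : nat, (m ^ 2 = 2 ^ n * #|R|)%N.
Proof.
move=> {R} ->; set R := [set a | [forall x, bil Q x a == 0]].
have R0 : 0 \in R by rewrite inE; apply/forallP => x; rewrite bil0r.
have RD : forall x y, x \in R -> y \in R -> x + y \in R.
  move=> x y; rewrite !inE => /forallP hx /forallP hy; apply/forallP => z.
  by rewrite bilDr (eqP (hx z)) (eqP (hy z)) addr0.
have Rb : forall a x, a \in R -> bil Q x a = 0.
  by move=> a x; rewrite inE => /forallP /(_ x) /eqP.
set q := qform Q.
pose S l := \sum_(a in R) chi (q a + dot l a).
have [l Sl] : exists l, S l != 0.
  case: (boolP [exists l, S l != 0]) => [/existsP [l hl]|H]; first by exists l.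
  have : \sum_l S l = 0.
    apply: big1 => l _; move: H; rewrite negb_exists => /forallP /(_ l).
    by rewrite negbK => /eqP.
  rewrite /S exchange_big /= (bigD1 0) //= [X in _ + X]big1 => [|a /andP [aR anz]].
    under eq_bigr => l _ do rewrite dot0r addr0 /q qform0.
    by rewrite sumr_const addr0 chi0 => /eqP; rewrite pnatr_eq0 -cardsT card_vec expn_eq0.
  under eq_bigr => l _ do rewrite chiD.
  rewrite -mulr_sumr; have [i ai] := exists_coord anz.
  rewrite (@sum_chi_balT n (fun l => dot l a) (delta_mx 0 i)) ?mulr0 //.
    by rewrite dotC dot_delta.
  by move=> x; rewrite dotDl.
have SR : S l = #|R|%:R.
  apply: sum_chi_const => a aR.
  case: (F2_cases (q a + dot l a)) => // h1.
  case/negP: Sl; apply/eqP; apply: (sum_chi_bal RD aR h1) => x xR.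
  rewrite /q qformD dotDr Rb //; ring.
pose W := \sum_x chi (q x + dot l x).
have W2 : W ^+ 2 = #|[set: vecF2 n]|%:R * S l.
  rewrite expr2 /W big_distrlr /=.
  under eq_bigr => x _ do rewrite (reindex_inj (addrI x)) /=.
  have e : forall x a, chi (q x + dot l x) * chi (q (x + a) + dot l (x + a))
       = chi (bil Q x a) * chi (q a + dot l a).
    move=> x a; rewrite -!chiD /q qformD dotDr.
    congr chi.
    set u := qform Q x + dot l x.
    have -> : u + (qform Q x + qform Q a + bil Q x a + (dot l x + dot l a))
       = bil Q x a + (qform Q a + dot l a) + u *+ 2 by rewrite /u; ring.
    by rewrite F2_2 addr0.
  under eq_bigr => x _ do under eq_bigr => a _ do rewrite e.
  rewrite exchange_big /= /S mulr_sumr [RHS]big_mkcond /=; apply: eq_bigr => a _.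
  rewrite -mulr_suml; case: ifPn => aR.
    rewrite (eq_bigr (fun _ => 1)) => [|x _]; last by rewrite Rb.
    by rewrite sumr_const cardsT.
  move: aR; rewrite inE negb_forall => /existsP [x0 /F2_neq0 hx0].
  rewrite (@sum_chi_balT n (fun x => bil Q x a) x0) ?mul0r //.
  by move=> x; rewrite bilDl.
exists `|W|%N.
by rewrite -abszX W2 SR card_vec -natrM natz absz_nat.
Qed.


Unset Implicit Arguments.

Theorem mainTheorem4 (n : nat) (F : 'rV['F_2]_n -> 'rV['F_2]_n) :
  ~~ odd n -> quadratic F -> APN F ->
  forall b : 'rV['F_2]_n, b != 0 -> (1 <= dimVb F b)%N -> ~~ odd (dimVb F b).
Proof.
move=> nev hq hapn b bnz _.
have [Q [c [d hQ]]] := hq b.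
have hV := Vb_rad hapn bnz hQ.
have R0 : 0 \in Vb F b by rewrite hV inE; apply/forallP => x; rewrite bil0r.
have RD : forall x y, x \in Vb F b -> y \in Vb F b -> x + y \in Vb F b.
  move=> x y; rewrite hV !inE => /forallP hx /forallP hy; apply/forallP => z.
  by rewrite bilDr (eqP (hx z)) (eqP (hy z)) GRing.addr0.
have hc := card_span R0 RD.
have [m hm] := walsh_sq hV.
rewrite hc -expnD in hm.
have := congr1 (logn 2) hm; rewrite lognX pfactorK // => e.
have := congr1 odd e; rewrite oddD oddM /= (negbTE nev) /=.
by rewrite /dimVb => <-.
Qed.
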